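(* Under the assumptions below, if $\sigma_b \neq 0$ then \[ W_{\mathrm{out}} W_{\mathrm{in}} = U \Big(I_{m} - s^{-1} \big(I_m - B_1^{\dagger} B_1\big) B_2^\top B_2 \Big) B_1^{\dagger}, \qquad s = B_2 \big(I - B_1^{\dagger} B_1\big) B_2^\top \in \mathbb{R}. \] If $\sigma_b = 0$ then instead \[ W_{\mathrm{out}} W_{\mathrm{in}} = U B_1^{\dagger}. \]
   Context: Consider the untrained linear diagonal continuous-time reservoir $\dot{r}(t) = (-1 + \omega) r(t) + W_{\mathrm{in}} u(t) + \sigma_b \mathbf{1}_n$, with reservoir state $r(t)\in\mathbb{R}^n$, input $u(t)\in\mathbb{R}^d$, input matrix $W_{\mathrm{in}}\in\mathbb{R}^{n\times d}$, scalars $\omega<1$ and $\sigma_b\in\mathbb{R}$, and $\mathbf{1}_n$ the all-ones vector. The reservoir is driven by a training input $u$ on $[0,T]$ from $r(0)=0$, and snapshots are collected at equally spaced times $t_1,\dots,t_m\in[0,T]$ (spacing $h$) into $U=[u(t_1)\cdots u(t_m)]\in\mathbb{R}^{d\times m}$ and $R=[r(t_1)\cdots r(t_m)]\in\mathbb{R}^{n\times m}$ ($R$ assumed full row rank). The readout is obtained by least squares, $W_{\mathrm{out}} = U R^{\top}(RR^{\top})^{-1} = U R^{\dagger}$ ($\dagger$ is the Moore–Penrose pseudoinverse), and the trained closed-loop system is $\dot r = ((-1+\omega)I + W_{\mathrm{in}}W_{\mathrm{out}}) r + \sigma_b \mathbf{1}_n$. By the variation of constants formula, $r(t_i) = W_{\mathrm{in}}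 b_1(t_i) + b_2(t_i)\mathbf{1}_n$ with $b_1(t_i) = \int_0^{t_i} e^{(\omega-1)(t_i-\tau)}u(\tau)\,d\tau \in\mathbb{R}^d$ and $b_2(t_i) = \sigma_b\big(e^{(\omega-1)t_i}-1\big)/(\omega-1)\in\mathbb{R}$; define $B_1 = [b_1(t_1)\cdots b_1(t_m)]$ and $B_2 = [b_2(t_1)\cdots b_2(t_m)]$. Data informativity assumption: (1) $u\in L^2([0,T];\mathbb{R}^d)$; (2) if $\sigma_b=0$, then $m\ge d$ and the components $u_1,\dots,u_d$ are linearly independent in $L^2([0,T];\mathbb{R})$; (3) if $\sigma_b\neq 0$, then $m\ge d+1$ and $u_1,\dots,u_d$ together with the constant function $1$ are linearly independent in $L^2([0,T];\mathbb{R})$. The sample times are assumed to lie outside the Lebesgue-measure-zero set on which the rows of $B_1$ and $B_2$ fail to be mutually linearly independent. Further assume $W_{\mathrm{in}}$ has full column rank $d$ and $\mathbf{1}_n\notin \operatorname{Im} W_{\mathrm{in}}$. *)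

(* Defs.v *)
From HB Require Import structures.
From mathcomp Require Import all_boot all_order all_algebra.
From mathcomp Require Import all_classical all_reals all_analysis.
Set Implicit Arguments. Unset Strict Implicit. Unset Printing Implicit Defensive.
Import Order.TTheory GRing.Theory Num.Theory.
Local Open Scope classical_set_scope.
Local Open Scope ring_scope.

Section Reservoir.
Variable R : realType.

Definition is_MP_pinv (p q : nat) (A : 'M[R]_(p, q)) (X : 'M[R]_(q, p)) : Prop :=
  [/\ A *m X *m A = A, X *m A *m X = X,
      (A *m X)^T = A *m X & (X *m A)^T = X *m A].

Definition L2_on (T : R) (f : R -> R) : Prop :=
  let I : set R := `[0, T]%classic in
  measurable_fun I f /\
  (\int[@lebesgue_measure R]_(x in I) ((f x) ^+ 2)%:E < +oo)%E.

(* f = 0 as an element of L^2([0,T]) : f vanishes a.e. on [0,T]. *)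
Definition L2_zero_on (T : R) (f : R -> R) : Prop :=
  (@lebesgue_measure R).-negligible (`[0, T]%classic `&` [set x | f x != 0]).

Definition L2_lin_indep (T : R) (d : nat) (u : 'I_d -> R -> R) (with_one : bool) : Prop :=
  forall (c : 'I_d -> R) (c0 : R),
    L2_zero_on T (fun x => \sum_(k < d) c k * u k x + (if with_one then c0 else 0)) ->
    (forall k, c k = 0) /\ (with_one -> c0 = 0).

Definition b1 (d : nat) (omega : R) (u : 'I_d -> R -> R) (t : R) : 'cV[R]_d :=
  \col_k Rintegral (@lebesgue_measure R) `[0, t]%classic
          (fun tau => expR ((omega - 1) * (t - tau)) * u k tau).

Definition b2 (omega sigma_b t : R) : R :=
  sigma_b * (expR ((omega - 1) * t) - 1) / (omega - 1).

(* reservoir state r(t) = W_in b_1(t) + b_2(t) 1_n (variation of constants) *)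
Definition rstate (n d : nat) (Win : 'M[R]_(n, d)) (omega sigma_b : R)
  (u : 'I_d -> R -> R) (t : R) : 'cV[R]_n :=
  Win *m b1 omega u t + b2 omega sigma_b t *: const_mx 1.

Definition sample_time (m : nat) (t0 h : R) (i : 'I_m) : R := t0 + i%:R * h.

Definition Bmat1 (m d : nat) (omega : R) (u : 'I_d -> R -> R) (t0 h : R) : 'M[R]_(d, m) :=
  \matrix_(k, i) b1 omega u (sample_time t0 h i) k 0.

Definition Bmat2 (m : nat) (omega sigma_b t0 h : R) : 'M[R]_(1, m) :=
  \matrix_(k, i) b2 omega sigma_b (sample_time t0 h i).

Definition Rmat (m n d : nat) (Win : 'M[R]_(n, d)) (omega sigma_b : R)
  (u : 'I_d -> R -> R) (t0 h : R) : 'M[R]_(n, m) :=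
  \matrix_(j, i) rstate Win omega sigma_b u (sample_time t0 h i) j 0.

Definition Umat (m d : nat) (u : 'I_d -> R -> R) (t0 h : R) : 'M[R]_(d, m) :=
  \matrix_(k, i) u k (sample_time t0 h i).

(* least-squares readout W_out = U R^T (R R^T)^{-1} *)
Definition Wout (m n d : nat) (U : 'M[R]_(d, m)) (Rm : 'M[R]_(n, m)) : 'M[R]_(d, n) :=
  U *m Rm^T *m invmx (Rm *m Rm^T).

End Reservoir.

(* Main.v *)
Require Import Defs.
From HB Require Import structures.
From mathcomp Require Import all_boot all_order all_algebra.
From mathcomp Require Import all_classical all_reals all_analysis.
Import Order.TTheory GRing.Theory Num.Theory.
Local Open Scope classical_set_scope.
Local Open Scope ring_scope.
Lemma sos_eq0 (F : realFieldType) k (v : 'rV[F]_k) : v *m v^T = 0 -> v = 0.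
Proof.
move=> H0; have := congr1 (fun A : 'M[F]_1 => A 0 0) H0; rewrite !mxE => H.
apply/rowP => j; rewrite mxE.
have hp : forall i, xpredT i -> 0 <= v 0 i * v^T i 0.
  by move=> i _; rewrite mxE -expr2 sqr_ge0.
have := psumr_eq0P hp H (i:=j) isT.
rewrite mxE -expr2 => /eqP; rewrite sqrf_eq0 => /eqP -> //.
Qed.

Lemma gram_unit (F : realFieldType) n m (A : 'M[F]_(n, m)) :
  row_free A -> A *m A^T \in unitmx.
Proof.
move=> hA; rewrite -row_free_unit; apply/inj_row_free => v H.
have : (v *m A) *m (v *m A)^T = 0 by rewrite trmx_mul !mulmxA -(mulmxA v A) H !mul0mx.
move/sos_eq0 => H0; apply: (row_free_inj hA); by rewrite H0 mul0mx.
Qed.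

Lemma linj (F : fieldType) n k p (M : 'M[F]_(n, k)) (X Y : 'M[F]_(k, p)) :
  row_free M^T -> M *m X = M *m Y -> X = Y.
Proof.
move=> hM e; apply: trmx_inj; apply: (row_free_inj hM).
by rewrite /= -!trmx_mul e.
Qed.

Lemma key (F : realFieldType) n k m p (M : 'M[F]_(n, k)) (C : 'M[F]_(k, m))
  (U : 'M[F]_(p, m)) (G : 'M[F]_(m, k)) :
  row_free M^T -> row_free (M *m C) -> C *m G = 1%:M -> (G *m C)^T = G *m C ->
  U *m (M *m C)^T *m invmx ((M *m C) *m (M *m C)^T) *m M = U *m G.
Proof.
move=> hM hR hCG hs.
have hu := @gram_unit F _ _ _ hR.
set Ai := invmx _.
have e1 : (M *m C *m (M *m C)^T) *m Ai = 1%:M by rewrite mulmxV.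
have hQ : C *m C^T *m (M^T *m Ai *m M) = 1%:M.
  apply: (@linj F _ _ _ M) => //; rewrite mulmx1 !mulmxA.
  by rewrite -(mulmxA (M *m C) C^T M^T) -trmx_mul e1 mul1mx.
have hCt : C^T = G *m C *m C^T.
  by rewrite -hs trmx_mul -mulmxA -trmx_mul hCG trmx1 mulmx1.
rewrite trmx_mul -(mulmxA U) hCt -!mulmxA.
by rewrite (mulmxA C) (mulmxA (C *m C^T)) (mulmxA (C*m C^T *m M^T)) -(mulmxA (C *m C^T)) -(mulmxA (C *m C^T)) hQ mulmx1.
Qed.
Theorem lemma1 (R : realType) (n d m : nat) (Win : 'M[R]_(n, d))
  (omega sigma_b T t0 h : R) (u : 'I_d -> R -> R) (B1d : 'M[R]_(m, d)) :
  omega < 1 -> 0 < h -> 0 <= t0 ->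
  (forall i : 'I_m, sample_time t0 h i <= T) ->
  (* data informativity *)
  (forall k, L2_on T (u k)) ->
  (sigma_b = 0 -> (d <= m)%N /\ L2_lin_indep T u false) ->
  (sigma_b != 0 -> (d.+1 <= m)%N /\ L2_lin_indep T u true) ->
  (* sample times outside the degenerate set: rows of B1, B2 linearly independent *)
  row_free (Bmat1 m omega u t0 h) ->
  (sigma_b != 0 -> row_free (col_mx (Bmat1 m omega u t0 h) (Bmat2 m omega sigma_b t0 h))) ->
  (* R full row rank, W_in full column rank, 1_n not in Im W_in *)
  row_free (Rmat m Win omega sigma_b u t0 h) ->
  \rank Win = d ->
  ~~ ((const_mx 1 : 'rV[R]_n) <= Win^T)%MS ->
  (* B1d is the Moore-Penrose pseudoinverse of B1 *)
  is_MP_pinv (Bmat1 m omega u t0 h) B1d ->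
  let B1 := Bmat1 m omega u t0 h in
  let B2 := Bmat2 m omega sigma_b t0 h in
  let U := Umat m u t0 h in
  let WoW := Wout U (Rmat m Win omega sigma_b u t0 h) *m Win in
  let s : R := (B2 *m (1%:M - B1d *m B1) *m B2^T) 0 0 in
  (sigma_b != 0 ->
     WoW = U *m (1%:M - s^-1 *: ((1%:M - B1d *m B1) *m B2^T *m B2)) *m B1d) /\
  (sigma_b = 0 -> WoW = U *m B1d).
Proof.
move=> _ _ _ _ _ _ _ hB1 hC hRf hWin h1 [mp1 mp2 mp3 mp4] B1 B2 U WoW s.
have hB1B1d : B1 *m B1d = 1%:M.
  apply: (row_free_inj hB1); by rewrite mul1mx.
have hWinT : row_free Win^T by rewrite /row_free mxrank_tr hWin.
split.
  move=> hs.
  have hCf := hC hs.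
  pose one : 'cV[R]_n := const_mx 1.
  pose M := row_mx Win one.
  pose C := col_mx B1 B2.
  have hR : Rmat m Win omega sigma_b u t0 h = M *m C.
    rewrite /M /C mul_row_col.
    apply/matrixP => j i; rewrite !mxE /rstate big_ord1 /B1 /B2 /one !mxE mul1r mulr1.
    by congr (_ + _); apply: eq_bigr => k _; rewrite !mxE.
  have hWE : Win = M *m col_mx 1%:M 0 by rewrite mul_row_col mulmx1 mulmx0 addr0.
  pose P := 1%:M - B1d *m B1.
  pose X := (1%:M - s^-1 *: (P *m B2^T *m B2)) *m B1d.
  pose Y := s^-1 *: (P *m B2^T).
  pose G := row_mx X Y.
  have hGE : G *m col_mx 1%:M 0 = X by rewrite mul_row_col mulmx1 mulmx0 addr0.
  have hMT : row_free M^T.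
    rewrite /M tr_row_mx; apply/inj_row_free => v.
    rewrite -(hsubmxK v) mul_row_col => hv.
    set a := lsubmx v in hv *; set b := rsubmx v in hv *.
    have hone : b *m one^T = b 0 0 *: const_mx 1.
      by apply/rowP => k; rewrite !mxE big_ord1 !mxE mulr1.
    have hb : b = 0.
      apply/rowP => k; rewrite ord1 [RHS]mxE.
      apply/eqP; apply: contraNT h1 => hb0.
      have -> : (const_mx 1 : 'rV_n) = - (b 0 0)^-1 *: (a *m Win^T).
        move/eqP: hv; rewrite addr_eq0 => /eqP ->.
        by rewrite hone scaleNr scalerN opprK scalerA mulVf // scale1r.
      by rewrite scalemx_sub // submxMl.
    rewrite hb mul0mx addr0 in hv.
    have ha : a = 0 by apply: (row_free_inj hWinT); rewrite hv mul0mx.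
    by rewrite ha hb row_mx0.
  have hPsym : P^T = P by rewrite /P linearB /= trmx1 mp4.
  have hQQ : B1d *m B1 *m (B1d *m B1) = B1d *m B1 by rewrite mulmxA mp2.
  have hPP : P *m P = P.
    by rewrite /P mulmxBl !mulmxBr !mul1mx !mulmx1 hQQ subrr subr0.
  have hsM : B2 *m P *m B2^T = s%:M by rewrite [LHS]mx11_scalar.
  have hB1P : B1 *m P = 0 by rewrite /P mulmxBr mulmx1 mulmxA mp1 subrr.
  have hs0 : s != 0.
    apply/eqP => s0.
    have e : (B2 *m P) *m (B2 *m P)^T = 0.
      rewrite trmx_mul hPsym mulmxA -(mulmxA B2 P P) hPP hsM s0.
      by apply/matrixP => i j; rewrite !mxE mul0rn.
    have hBP := @sos_eq0 R _ _ e.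
    pose v : 'rV[R]_(d + 1) := row_mx (- (B2 *m B1d)) 1%:M.
    have hv : v *m C = 0 *m C.
      rewrite mul0mx mul_row_col mul1mx mulNmx addrC.
      by move: hBP; rewrite /P mulmxBr mulmx1 mulmxA.
    have := congr1 (fun A : 'rV[R]_(d + 1) => rsubmx A 0 0) (row_free_inj hCf hv).
    by rewrite /= row_mxKr !mxE /= => /eqP; rewrite oner_eq0.
  have hCG : C *m G = 1%:M.
    have hB1X : B1 *m X = 1%:M.
      by rewrite /X mulmxA mulmxBr mulmx1 scalemxAr !mulmxA hB1P !mul0mx ?scaler0 subr0 hB1B1d.
    have hB1Y : B1 *m Y = 0 by rewrite /Y scalemxAr mulmxA hB1P mul0mx ?scaler0.
    have hB2X : B2 *m X = 0.
      rewrite /X mulmxA mulmxBr mulmx1 scalemxAr !mulmxA hsM mul_scalar_mx scalerA.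
      by rewrite divff // scale1r subrr mul0mx.
    have hB2Y : B2 *m Y = 1%:M by rewrite /Y -scalemxAr mulmxA hsM scale_scalar_mx mulVf.
    by rewrite /C /G mul_col_row hB1X hB1Y hB2X hB2Y -scalar_mx_block.
  have hGC : (G *m C)^T = G *m C.
    pose Z := P *m B2^T *m B2.
    have hZP : Z *m P = Z - Z *m (B1d *m B1) by rewrite /P mulmxBr mulmx1.
    have hGC' : G *m C = B1d *m B1 + s^-1 *: (Z *m P).
      rewrite /G /C mul_row_col /X /Y -mulmxA mulmxBl mul1mx -!scalemxAl -/Z.
      by rewrite hZP scalerBr addrA [LHS]addrAC.
    rewrite hGC' linearD linearZ /= mp4 /Z !trmx_mul trmxK hPsym !mulmxA.
    by [].
  rewrite /WoW /Wout hR hWE !mulmxA.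
  rewrite (@key R n (d + 1) m d M C U G) //; last by rewrite -hR.
  by rewrite -(mulmxA U G) hGE /X mulmxA.
move=> hs0.
have hR : Rmat m Win omega sigma_b u t0 h = Win *m B1.
  apply/matrixP => j i; rewrite !mxE /rstate /b2 hs0 !mul0r addr0.
  by apply: eq_bigr => k _; rewrite !mxE.
rewrite /WoW /Wout hR.
apply: (@key R n d m d Win B1 U B1d) => //; first by rewrite -hR.
Qed.
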